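(* Let $\mathcal C$ be a binary linear code presented by an $m\times n$ parity-check matrix $H$, let $\mathbf c\in\mathcal C$ be a codeword, let $\boldsymbol\omega$ be a linear programming pseudocodeword, and define $\phi_{\mathbf c}:\mathbb R^n\to\mathbb R^n$ by $x_i\mapsto(-1)^{c_i}x_i$ for $i=1,\dots,n$. Let $\mathbf t\in\mathcal K_{\boldsymbol\omega}$. Then $\phi_{\mathbf c}(\mathbf t)\in\mathcal K_{\boldsymbol\omega^{\mathbf c}}$. Moreover, for every $\sigma>0$, if $\boldsymbol\eta$ is a random vector with i.i.d. $N(0,\sigma^2)$ coordinates, then the probability that $\boldsymbol\omega$ is the unique optimal solution of minimizing $(\mathbf t+\boldsymbol\eta)^T\mathbf x$ over $\mathbf x\in\mathcal P(H)$ equals the probability that $\boldsymbol\omega^{\mathbf c}$ is the unique optimal solution of minimizing $(\phi_{\mathbf c}(\mathbf t)+\boldsymbol\eta)^T\mathbf x$ over $\mathbf x\in\mathcal P(H)$.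
   Context: For a row $\mathbf h_j$ of $H=(h_{j,i})$ let $N(\mathbf h_j)=\{i : h_{j,i}=1\}$. The fundamental polytope $\mathcal P(H)$ is written as $\{\mathbf x: A\mathbf x\ge\mathbf b\}$ with the following constraints (rows of $A$ with right-hand sides): $x_i\ge 0$ and $-x_i\ge -1$ for each $i=1,\dots,n$; and for every row index $j$ and every odd-sized $S\subseteq N(\mathbf h_j)$, $-\sum_{i\in S}x_i+\sum_{i'\in N(\mathbf h_j)\setminus S}x_{i'}\ge 1-|S|$. A linear programming (LP) pseudocodeword is an extreme point of $\mathcal P(H)$. For $\mathbf c\in\mathcal C$ and $\mathbf x\in\mathcal P(H)$, the relative point $\mathbf x^{\mathbf c}$ has $i$th coordinate $|x_i-c_i|$; if $\boldsymbol\omega$ is an LP pseudocodeword, so is $\boldsymbol\omega^{\mathbf c}$. The recovery cone $\mathcal K_{\boldsymbol\omega}$ is the set of conic (nonnegative) combinations of the rows of $A$ whose constraints are active (hold with equality) at $\boldsymbol\omega$. The LP decoder, given a received vector $\mathbf y$ (treated as the vector of log-likelihood ratios on the AWGN channel), minimizes $\mathbf y^T\mathbf x$ over $\mathbf x\in\mathcal P(H)$; transmitting $\mathbf t$ over the AWGN channel produces the received vector $\mathbf t+\boldsymbol\eta$. *)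

(* Defs.v *)
From HB Require Import structures.
From mathcomp Require Import all_boot all_order all_algebra.
From mathcomp Require Import all_classical all_reals all_analysis.
From Stdlib Require List.

Set Implicit Arguments.
Unset Strict Implicit.
Unset Printing Implicit Defensive.

Import Order.TTheory GRing.Theory Num.Theory.

Local Open Scope classical_set_scope.
Local Open Scope ring_scope.

Definition codeword (m n : nat) (H : 'M['F_2]_(m, n)) (c : 'rV['F_2]_n) : Prop :=
  H *m c^T = 0.

Definition Nrow (m n : nat) (H : 'M['F_2]_(m, n)) (j : 'I_m) : {set 'I_n} :=
  [set i | H j i == 1].

Definition bitR (R : realType) (n : nat) (c : 'rV['F_2]_n) (i : 'I_n) : R :=
  if c 0 i == 0 then 0 else 1.
Arguments bitR R {n} c i.

(* Constraints (rows of A, with right-hand sides b) of P(H).           *)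

Inductive cstr (m n : nat) : Type :=
| CLo of 'I_n
| CHi of 'I_n
| CPar of 'I_m & {set 'I_n}.   (* parity constraint for row j, odd S *)

Definition cstr_valid (m n : nat) (H : 'M['F_2]_(m, n)) (k : cstr m n) : Prop :=
  match k with
  | CLo _ => True
  | CHi _ => True
  | CPar j S0 => (S0 \subset Nrow H j) /\ odd #|S0|
  end.

Definition cstr_row (R : realType) (m n : nat) (H : 'M['F_2]_(m, n))
  (k : cstr m n) : 'I_n -> R :=
  match k with
  | CLo i => fun i' => if i' == i then 1 else 0
  | CHi i => fun i' => if i' == i then -1 else 0
  | CPar j S0 => fun i' => if i' \in S0 then -1
                          else if i' \in Nrow H j then 1 else 0
  end.

Definition cstr_rhs (R : realType) (m n : nat) (k : cstr m n) : R :=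
  match k with
  | CLo _ => 0
  | CHi _ => -1
  | CPar _ S0 => 1 - (#|S0|)%:R
  end.
Arguments cstr_rhs R {m n} k.
Arguments cstr_row R {m n} H k.

Definition dotR {R : realType} (n : nat) (a x : 'I_n -> R) : R :=
  \sum_(i < n) a i * x i.

Definition fund_polytope (R : realType) (m n : nat) (H : 'M['F_2]_(m, n)) :
  set ('I_n -> R) :=
  [set x | forall k : cstr m n, cstr_valid H k ->
       cstr_rhs R k <= dotR (cstr_row R H k) x].
Arguments fund_polytope R {m n} H.

Definition extreme_point (R : realType) (n : nat) (K : set ('I_n -> R))
  (x : 'I_n -> R) : Prop :=
  K x /\
  forall (y z : 'I_n -> R) (l : R), K y -> K z -> 0 < l < 1 ->
    x = (fun i => l * y i + (1 - l) * z i) -> y = z.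

Definition LP_pseudocodeword (R : realType) (m n : nat) (H : 'M['F_2]_(m, n))
  (w : 'I_n -> R) : Prop :=
  extreme_point (fund_polytope R H) w.

Definition relpt (R : realType) (n : nat) (c : 'rV['F_2]_n) (x : 'I_n -> R) :
  'I_n -> R :=
  fun i => `|x i - bitR R c i|.

Definition phi (R : realType) (n : nat) (c : 'rV['F_2]_n) (x : 'I_n -> R) :
  'I_n -> R :=
  fun i => (-1) ^+ (c 0 i != 0) * x i.

Definition active (R : realType) (m n : nat) (H : 'M['F_2]_(m, n))
  (w : 'I_n -> R) (k : cstr m n) : Prop :=
  dotR (cstr_row R H k) w = cstr_rhs R k.

Definition recovery_cone (R : realType) (m n : nat) (H : 'M['F_2]_(m, n))
  (w : 'I_n -> R) : set ('I_n -> R) :=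
  [set t | exists s : seq (cstr m n * R),
     (forall p, Stdlib.Lists.List.In p s -> [/\ cstr_valid H p.1, active H w p.1 & 0 <= p.2])
     /\ t = (fun i => \sum_(p <- s) p.2 * cstr_row R H p.1 i)].

Definition unique_opt (R : realType) (m n : nat) (H : 'M['F_2]_(m, n))
  (y w : 'I_n -> R) : Prop :=
  fund_polytope R H w /\
  forall x, fund_polytope R H x -> x <> w -> dotR y w < dotR y x.

Definition iid_normal (R : realType) d (T : measurableType d)
  (P : probability T R) (n : nat) (eta : 'I_n -> {RV P >-> R}) (sigma : R) : Prop :=
  (forall B : 'I_n -> set R, (forall i, measurable (B i)) ->
     P (\bigcap_(i in [set: 'I_n]) (eta i @^-1` B i)) =
     (\prod_(i < n) P (eta i @^-1` B i))%E)
  /\ (forall i (A : set R), measurable A ->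
        distribution P (eta i) A = normal_prob 0 sigma A).

(* Main.v *)
Require Import Defs.
From HB Require Import structures.
From mathcomp Require Import all_boot all_order all_algebra.
From mathcomp Require Import all_classical all_reals all_analysis.
From mathcomp Require Import ring lra.
From mathcomp Require Import measurable_realfun.
Import Order.TTheory GRing.Theory Num.Theory.
Import numFieldNormedType.Exports.
Local Open Scope classical_set_scope.
Local Open Scope ring_scope.

Lemma F2_cases (x : 'F_2) : x = 0 \/ x = 1.
Proof.
have : (x < 2)%N by case: x.
case: x => [[|[|k]]] //= Hk _; [left|right]; exact/val_inj.
Qed.

Section Comb.
Variables (R : realType) (m n : nat) (H : 'M['F_2]_(m, n)) (c : 'rV['F_2]_n).

Definition cb (i : 'I_n) : bool := c 0 i != 0.
Definition Xs (j : 'I_m) : {set 'I_n} := [set i | (H j i == 1) && cb i].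

Definition flip (k : cstr m n) : cstr m n :=
  match k with
  | CLo i => if cb i then CHi m i else CLo m i
  | CHi i => if cb i then CLo m i else CHi m i
  | CPar j S0 => CPar j ((S0 :\: Xs j) :|: (Xs j :\: S0))
  end.

Lemma flipK k : flip (flip k) = k.
Proof.
case: k => [i|i|j S0] /=; try by case E: (cb i) => /=; rewrite ?E.
congr CPar; apply/setP => i; rewrite !(finset.in_setU, finset.in_setD).
by case: (i \in S0); case: (i \in Xs j).
Qed.

Lemma codeword_even j : codeword H c -> ~~ odd #|Xs j|.
Proof.
move=> Hc; have := congr1 (fun (M : 'M['F_2]_(m, 1)) => M j 0) Hc.
rewrite /= !mxE => E.
have E2 : \sum_i H j i * c^T i 0 = (#|Xs j|)%:R :> 'F_2.
  rewrite -sum1_card natr_sum [RHS]big_mkcond /=; apply: eq_bigr => i _.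
  rewrite mxE inE /cb.
  by case: (F2_cases (H j i)) => ->; case: (F2_cases (c 0 i)) => -> ;
     rewrite ?mul0r ?mulr0 ?mulr1.
rewrite E2 in E; rewrite -dvdn2 (dvdn_pcharf (@pchar_Fp 2 isT)) E //.
Qed.

Lemma flip_valid k : codeword H c -> cstr_valid H k -> cstr_valid H (flip k).
Proof.
move=> Hc; case: k => [i|i|j S0] /=; try by case: (cb i).
move=> [SN oS]; split.
  rewrite finset.subUset; apply/andP; split.
    exact: fintype.subset_trans (finset.subsetDl _ _) SN.
  apply: fintype.subset_trans (finset.subsetDl _ _) _; apply/fintype.subsetP => i.
  by rewrite /Nrow !inE => /andP[].
have d0 : (S0 :\: Xs j) :&: (Xs j :\: S0) = finset.set0.
  apply/setP => i; rewrite !inE; by case: (i \in S0); case: (i \in Xs j); rewrite ?andbF.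
rewrite cardsU d0 finset.cards0 subn0.
have e1 := cardsID (Xs j) S0. have e2 := cardsID S0 (Xs j).
have ev := codeword_even j Hc.
rewrite -e1 in oS; rewrite -e2 finset.setIC in ev.
move: oS ev; rewrite !oddD.
by case: (odd #|S0 :&: Xs j|); case: (odd #|S0 :\: Xs j|); case: (odd #|Xs j :\: S0|).
Qed.

Lemma sgnE (b : bool) : (-1) ^+ b = (if b then -1 else 1 : R).
Proof. by case: b; rewrite ?expr1 ?expr0. Qed.

Lemma row_flip k i : cstr_valid H k ->
  cstr_row R H (flip k) i = (-1) ^+ cb i * cstr_row R H k i.
Proof.
case: k => [i'|i'|j S0] /=.
- move=> _; have [->|ne] := eqVneq i i'.
  + by case E: (cb i') => /=; rewrite eqxx /= ?expr1 ?expr0 ?mulN1r ?mul1r ?opprK.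
  + by rewrite ?(negbTE ne) mulr0; case: (cb i') => /=; rewrite (negbTE ne).
- move=> _; have [->|ne] := eqVneq i i'.
  + by case E: (cb i') => /=; rewrite eqxx /= ?expr1 ?expr0 ?mulN1r ?mul1r ?opprK.
  + by rewrite ?(negbTE ne) mulr0; case: (cb i') => /=; rewrite (negbTE ne).
- move=> [SN _].
  have SN' : i \in S0 -> i \in Nrow H j by move/(fintype.subsetP SN).
  move: SN'; rewrite !(finset.in_setU, finset.in_setD) /Xs /Nrow !inE.
  rewrite sgnE; case: (i \in S0); case: (H j i == 1); case: (cb i) => /= h;
    rewrite ?mul1r ?mulN1r ?opprK ?oppr0 ?mulr0 //; by have := h isT.
Qed.

Lemma sum_ind (A : {set 'I_n}) : \sum_i ((i \in A)%:R : R) = #|A|%:R.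
Proof.
rewrite -sum1_card natr_sum [RHS]big_mkcond /=; apply: eq_bigr => i _.
by case: (i \in A).
Qed.

Lemma rhs_flip k : codeword H c -> cstr_valid H k ->
  cstr_rhs R (flip k) = cstr_rhs R k - \sum_i (if cb i then cstr_row R H k i else 0).
Proof.
move=> Hc; case: k => [i|i|j S0] /= => [_|_|[SN oS]].
- rewrite (bigD1 i) //= eqxx big1 => [|i' /negbTE ->]; last by case: (cb i').
  by case: (cb i); rewrite /= addr0 ?subr0 ?sub0r.
- rewrite (bigD1 i) //= eqxx big1 => [|i' /negbTE ->]; last by case: (cb i').
  by case: (cb i); rewrite /= addr0 ?subr0 ?opprK ?addNr.
- have pw : forall i, (if cb i then (if i \in S0 then -1 else if i \in Nrow H j then 1 else 0) else 0)
      = ((i \in Xs j :\: S0)%:R - (i \in S0 :&: Xs j)%:R : R).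
    move=> i; have SN' : i \in S0 -> i \in Nrow H j by move/(fintype.subsetP SN).
    move: SN'; rewrite /Xs /Nrow !inE.
    case: (i \in S0); case: (H j i == 1); case: (cb i) => /= h;
      rewrite ?subr0 ?sub0r ?subrr //; by have := h isT.
  rewrite (eq_bigr _ (fun i _ => pw i)) sumrB !sum_ind.
  have d0 : (S0 :\: Xs j) :&: (Xs j :\: S0) = finset.set0.
    apply/setP => i; rewrite !inE; by case: (i \in S0); case: (i \in Xs j); rewrite ?andbF.
  rewrite cardsU d0 finset.cards0 subn0 -(cardsID (Xs j) S0) !natrD.
  ring.
Qed.

Definition in01 (x : 'I_n -> R) := forall i, 0 <= x i <= 1.

Lemma dot_phi_relpt (a x : 'I_n -> R) : in01 x ->
  dotR (phi c a) (relpt c x) = dotR a x - \sum_i (if cb i then a i else 0).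
Proof.
move=> hx; rewrite /dotR -sumrB; apply: eq_bigr => i _.
rewrite /phi /relpt /bitR /cb; have /andP[h0 h1] := hx i.
case: eqP => _ /=; first by rewrite expr0 mul1r !subr0 ger0_norm.
by rewrite expr1 ler0_norm ?subr_le0 //; ring.
Qed.

Lemma row_flipE k : cstr_valid H k ->
  cstr_row R H (flip k) = phi c (cstr_row R H k).
Proof. by move=> hk; apply/funext => i; rewrite row_flip. Qed.

Lemma slack_flip k x : codeword H c -> cstr_valid H k -> in01 x ->
  dotR (cstr_row R H (flip k)) (relpt c x) - cstr_rhs R (flip k) =
  dotR (cstr_row R H k) x - cstr_rhs R k.
Proof.
move=> Hc hk hx; rewrite row_flipE // dot_phi_relpt // rhs_flip //.
by rewrite opprB addrA subrK.
Qed.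


Lemma dot_unit (a : R) i0 (x : 'I_n -> R) :
  dotR (fun i => if i == i0 then a else 0) x = a * x i0.
Proof.
rewrite /dotR (bigD1 i0) //= eqxx big1 ?addr0 // => i /negbTE ->; by rewrite mul0r.
Qed.

Lemma poly01 x : fund_polytope R H x -> in01 x.
Proof.
move=> hx i; apply/andP; split.
  by have := hx (CLo m i) I; rewrite /= dot_unit mul1r.
by have := hx (CHi m i) I; rewrite /= dot_unit mulN1r lerN2.
Qed.

Lemma relpt01 x : in01 x -> in01 (relpt c x).
Proof.
move=> hx i; have /andP[h0 h1] := hx i; rewrite /relpt /bitR.
case: eqP => _; first by rewrite subr0 ger0_norm // h0 h1.
rewrite ler0_norm ?subr_le0 // opprB; apply/andP; split; lra.
Qed.

Lemma relptK x : in01 x -> relpt c (relpt c x) = x.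
Proof.
move=> hx; apply/funext => i; have /andP[h0 h1] := hx i; rewrite /relpt /bitR.
case: eqP => _; first by rewrite !subr0 !ger0_norm.
have -> : `|x i - 1| = 1 - x i by rewrite ler0_norm ?subr_le0 // opprB.
have -> : 1 - x i - 1 = - x i by ring.
by rewrite normrN ger0_norm.
Qed.

Lemma poly_relpt x : codeword H c -> fund_polytope R H x -> fund_polytope R H (relpt c x).
Proof.
move=> Hc hx k hk.
have hk' := flip_valid k Hc hk.
have := slack_flip (flip k) x Hc hk' (poly01 x hx).
rewrite flipK => e.
rewrite -subr_ge0 e subr_ge0; exact: hx.
Qed.

Lemma uopt_flip (y w : 'I_n -> R) : codeword H c -> unique_opt H y w ->
  unique_opt H (phi c y) (relpt c w).
Proof.
move=> Hc [hw hu]; split; first exact: poly_relpt.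
move=> x hx hne.
have w01 := poly01 w hw; have x01 := poly01 x hx.
have hx' : fund_polytope R H (relpt c x) by exact: poly_relpt.
have ne' : relpt c x <> w by move=> e; apply: hne; rewrite -e relptK.
have := hu _ hx' ne'.
rewrite -{2}(@relptK x x01) !dot_phi_relpt //; last exact: relpt01.
by rewrite ltrD2r.
Qed.

Lemma sum_flip (s : seq (cstr m n * R)) i :
  (forall p, List.In p s -> cstr_valid H p.1) ->
  (-1) ^+ cb i * \sum_(p <- s) p.2 * cstr_row R H p.1 i =
  \sum_(p <- [seq (flip p.1, p.2) | p <- s]) p.2 * cstr_row R H p.1 i.
Proof.
elim: s => [|p s IH] h; first by rewrite !big_nil mulr0.
rewrite /= !big_cons mulrDr IH; last by move=> q hq; apply: h; right.
rewrite /= row_flip; last by apply: h; left.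
congr (_ + _); ring.
Qed.

Lemma cone_flip (w t : 'I_n -> R) : codeword H c -> fund_polytope R H w -> recovery_cone H w t ->
  recovery_cone H (relpt c w) (phi c t).
Proof.
move=> Hc hw [s [hs ->]].
exists [seq (flip p.1, p.2) | p <- s]; split.
  move=> p /List.in_map_iff [[k a] [<- hin]] /=.
  have [hv ha h0] := hs _ hin; simpl in *.
  split => //; first exact: flip_valid.
  rewrite /active; apply/eqP; rewrite -subr_eq0 slack_flip //; last exact: poly01.
  by rewrite subr_eq0; apply/eqP.
apply/funext => i; rewrite /phi; apply: sum_flip.
by move=> p hp; have [] := hs _ hp.
Qed.

End Comb.
Lemma cont_sum (R : realType) (n : nat) (I : Type) (s : seq I) (f : I -> 'rV[R]_n -> R) :
  (forall i, continuous (f i)) -> continuous (fun v => \sum_(i <- s) f i v).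
Proof.
elim: s => [|i s IH] h.
  under eq_fun do rewrite big_nil; exact: cst_continuous.
under eq_fun do rewrite big_cons.
move=> x; exact: (cvgD (h i x) (IH h x)).
Qed.

Lemma cont_lin (R : realType) (n : nat) (a : 'I_n -> R) :
  continuous (fun v : 'rV[R]_n => \sum_i a i * v 0 i).
Proof.
apply: cont_sum => i x.
exact: (cvgM (cvg_cst (a i)) (@coord_continuous _ _ _ 0 i x)).
Qed.

Lemma cont_l1 (R : realType) (n : nat) (w : 'I_n -> R) :
  continuous (fun v : 'rV[R]_n => \sum_i `|v 0 i - w i|).
Proof.
apply: cont_sum => i x.
exact: (cvg_norm (cvgB (@coord_continuous _ _ _ 0 i x) (cvg_cst (w i)))).
Qed.

Section Geo.
Variables (R : realType) (m n : nat) (H : 'M['F_2]_(m, n)) (w : 'I_n -> R).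
Hypothesis hw : fund_polytope R H w.

Definition sl k := dotR (cstr_row R H k) w - cstr_rhs R k.
Definition l1 (x : 'I_n -> R) := \sum_i `|x i - w i|.

Lemma sl_ge0 k : cstr_valid H k -> 0 <= sl k.
Proof. by move=> hk; rewrite /sl subr_ge0; exact: hw. Qed.

Lemma fin_lb (I : finType) (f : I -> R) :
  exists2 r, 0 < r & forall i, 0 < f i -> r <= f i.
Proof.
have : forall s : seq I, exists2 r, 0 < r & forall i, i \in s -> 0 < f i -> r <= f i.
  elim => [|a s [r r0 hr]]; first by exists 1.
  case: (ltrP 0 (f a)) => fa.
  - exists (Num.min r (f a)); first by rewrite lt_min r0 fa.
    move=> i; rewrite inE => /orP[/eqP -> _|hi hf]; rewrite ge_min ?lexx ?orbT //.
    by rewrite hr.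
  - exists r => // i; rewrite inE => /orP[/eqP -> h|hi]; last exact: hr.
    by rewrite ltNge fa in h.
move=> /(_ (enum I)) [r r0 hr]; exists r => // i; apply: hr; by rewrite mem_enum.
Qed.

Lemma slack_lb : exists2 r, 0 < r & forall k, 0 < sl k -> r <= sl k.
Proof.
have [r1 r10 h1] := @fin_lb _ (fun i : 'I_n => sl (CLo m i)).
have [r2 r20 h2] := @fin_lb _ (fun i : 'I_n => sl (CHi m i)).
have [r3 r30 h3] := @fin_lb _ (fun p : 'I_m * {set 'I_n} => sl (CPar p.1 p.2)).
exists (Num.min r1 (Num.min r2 r3)); first by rewrite !lt_min r10 r20 r30.
case => [i|i|j S0] h.
- by rewrite ge_min h1.
- by rewrite !ge_min h2 ?orbT.
- by rewrite !ge_min (h3 (j, S0)) ?orbT.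
Qed.

Lemma row_le1 k i : `|cstr_row R H k i| <= 1.
Proof.
case: k => [i'|i'|j S0] /=; repeat case: ifP => _; by rewrite ?normrN ?normr1 ?normr0.
Qed.

Lemma dot_le_l1 k (d : 'I_n -> R) : `|dotR (cstr_row R H k) d| <= \sum_i `|d i|.
Proof.
rewrite /dotR; apply: le_trans (ler_norm_sum _ _ _) _; apply: ler_sum => i _.
rewrite normrM; apply: ler_piMl => //; exact: row_le1.
Qed.

Lemma dotB (a x y : 'I_n -> R) : dotR a (fun i => x i - y i) = dotR a x - dotR a y.
Proof. by rewrite /dotR -sumrB; apply: eq_bigr => i _; rewrite mulrBr. Qed.

Lemma dot_aff (a x y : 'I_n -> R) (s : R) :
  dotR a (fun i => x i + s * (y i - x i)) = dotR a x + s * (dotR a y - dotR a x).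
Proof.
rewrite -dotB /dotR mulr_sumr -big_split /=; apply: eq_bigr => i _; ring.
Qed.

Lemma l1_ge0 x : 0 <= l1 x. Proof. by apply: sumr_ge0 => i _. Qed.

Lemma l1_w : l1 w = 0.
Proof. by rewrite /l1 big1 // => i _; rewrite subrr normr0. Qed.

Lemma l1_pos x : x <> w -> 0 < l1 x.
Proof.
move=> ne; rewrite lt_neqAle l1_ge0 andbT eq_sym; apply/negP => /eqP h.
apply: ne; apply/funext => i.
have : `|x i - w i| <= l1 x.
  by rewrite /l1 (bigD1 i) //= lerDl sumr_ge0.
by rewrite h normr_le0 subr_eq0 => /eqP.
Qed.

Lemma scale_in r x : 0 < r -> (forall k, 0 < sl k -> r <= sl k) ->
  fund_polytope R H x -> x <> w ->
  fund_polytope R H (fun i => w i + (r / l1 x) * (x i - w i)) /\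
  l1 (fun i => w i + (r / l1 x) * (x i - w i)) = r.
Proof.
move=> r0 hr hx ne; have lp := l1_pos x ne.
have s0 : 0 <= r / l1 x by rewrite divr_ge0 // ltW.
have sl1 : r / l1 x * l1 x = r by rewrite divfK // gt_eqF.
split.
- move=> k hk; rewrite dot_aff.
  have hs := sl_ge0 k hk; have hxk := hx k hk.
  have hD := dot_le_l1 k (fun i => x i - w i); rewrite dotB -/(l1 x) in hD.
  set D := dotR (cstr_row R H k) x - dotR (cstr_row R H k) w in hD *.
  set s := r / l1 x in s0 sl1 *.
  move: hs; rewrite le_eqVlt => /orP[/eqP e|hpos].
  + have : 0 <= s * D.
      apply: mulr_ge0 => //; rewrite /D; rewrite /sl in e; lra.
    rewrite /sl in e; lra.
  + have hr' := hr k hpos; rewrite /sl in hr'.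
    have h1 : - (s * l1 x) <= s * D.
      rewrite -mulrN; apply: ler_wpM2l => //.
      by move: hD; rewrite ler_norml => /andP[].
    rewrite sl1 in h1; lra.
- rewrite /l1; under eq_bigr do rewrite addrAC subrr add0r normrM (ger0_norm s0).
  by rewrite -mulr_sumr.
Qed.

Lemma closed_half (a : 'I_n -> R) (b : R) :
  closed [set v : 'rV[R]_n | b <= \sum_i a i * v 0 i].
Proof.
have := @preimage_closed _ _ (fun v : 'rV[R]_n => \sum_i a i * v 0 i) [set x | b <= x].
apply; last exact: closed_ge.
by move=> v _; exact: cont_lin.
Qed.

Lemma closed_l1 (r : R) :
  closed [set v : 'rV[R]_n | r <= \sum_i `|v 0 i - w i|].
Proof.
have := @preimage_closed _ _ (fun v : 'rV[R]_n => \sum_i `|v 0 i - w i|) [set x | r <= x].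
apply; last exact: closed_ge.
by move=> v _; exact: cont_l1.
Qed.

Lemma sharp (u : 'I_n -> R) : unique_opt H u w ->
  exists2 eps, 0 < eps & forall x, fund_polytope R H x ->
    eps * l1 x <= dotR u x - dotR u w.
Proof.
move=> [_ hu].
have [r r0 hr] := slack_lb.
pose K : set 'rV[R]_n := [set v | fund_polytope R H (fun i => v 0 i) /\
                                  r <= \sum_i `|v 0 i - w i|].
pose f (v : 'rV[R]_n) := \sum_i u i * v 0 i.
have Kz : forall x, fund_polytope R H x -> x <> w ->
    K (\row_i (w i + (r / l1 x) * (x i - w i))).
  move=> x hx ne; have [h1 h2] := scale_in r x r0 hr hx ne.
  split.
  - move=> k hk; have := h1 k hk; congr (_ <= _).
    by rewrite /dotR; apply: eq_bigr => i _; rewrite mxE.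
  - have E : \sum_i `|(\row_i (w i + (r / l1 x) * (x i - w i))) 0 i - w i| =
             l1 (fun i => w i + (r / l1 x) * (x i - w i)).
      by apply: eq_bigr => i _; rewrite mxE.
    by rewrite E h2.
case: (pselect (K !=set0)) => [Kne|Ke]; last first.
  exists 1 => // x hx; case: (pselect (x = w)) => [->|ne].
    by rewrite l1_w mulr0 subrr.
  by exfalso; apply: Ke; exists (\row_i (w i + (r / l1 x) * (x i - w i))); exact: Kz.
have cK : compact K.
  have cB : compact [set v : 'rV[R]_n | forall i, `[(0:R), 1]%classic (v 0 i)].
    exact: (@rV_compact R n (fun=> `[(0:R), 1]%classic) (fun=> @segment_compact R 0 1)).
  apply: (subclosed_compact _ cB).
  - have -> : K = (\bigcap_(k in cstr_valid H)
                   [set v : 'rV[R]_n | cstr_rhs R k <= \sum_i cstr_row R H k i * v 0 i])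
                 `&` [set v | r <= \sum_i `|v 0 i - w i|].
      by apply/seteqP; split => v [h1 h2]; split => // k hk; apply: h1.
    apply: closedI; last exact: closed_l1.
    by apply: closed_bigI => k _; exact: closed_half.
  - move=> v [hv _] i; have /andP[a b] := @poly01 R m n H _ hv i.
    by rewrite /= in_itv /= a b.
have cf : continuous f by exact: cont_lin.
have [v0 /set_mem Kv0 hmin] := compact_EVT_min Kne cK (continuous_subspaceT cf).
have [hx0 hl0] := Kv0.
have ne0 : (fun i => v0 0 i) <> w.
  move=> e; move: hl0; rewrite -/(l1 (fun i => v0 0 i)) e l1_w; lra.
have c0 : 0 < f v0 - dotR u w by rewrite subr_gt0; exact: hu.
exists ((f v0 - dotR u w) / r); first by rewrite divr_gt0.
move=> x hx; case: (pselect (x = w)) => [->|ne]; first by rewrite l1_w mulr0 subrr.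
have lp := l1_pos x ne.
have := hmin _ (mem_set (Kz x hx ne)).
have -> : f (\row_i (w i + (r / l1 x) * (x i - w i))) =
          dotR u (fun i => w i + (r / l1 x) * (x i - w i)).
  by apply: eq_bigr => i _; rewrite mxE.
rewrite dot_aff.
have hs : r / l1 x * l1 x = r by rewrite divfK // gt_eqF.
set s := r / l1 x in hs *.
set D := dotR u x - dotR u w.
set c := f v0 - dotR u w in c0 *.
move=> h.
have h' : c <= s * D by rewrite /c; lra.
rewrite mulrAC ler_pdivrMr //.
apply: le_trans (ler_wpM2r (ltW lp) h') _.
have -> : s * D * l1 x = D * (s * l1 x) by ring.
by rewrite hs.
Qed.

Lemma uopt_open u : unique_opt H u w ->
  exists2 e, 0 < e & forall u', (forall i, `|u' i - u i| < e) -> unique_opt H u' w.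
Proof.
move=> hu; have [eps e0 he] := sharp u hu.
exists eps => // u' hu'; split => // x hx ne.
have [i0 hi0] : exists i0, x i0 <> w i0.
  apply: contrapT => h; apply: ne; apply/funext => i.
  by apply: contrapT => h'; apply: h; exists i.
have E : dotR u' x - dotR u' w - (dotR u x - dotR u w) =
         \sum_i (u' i - u i) * (x i - w i).
  by rewrite -!dotB /dotR -sumrB; apply: eq_bigr => i _; ring.
have pos : 0 < \sum_i (eps - `|u' i - u i|) * `|x i - w i|.
  rewrite (bigD1 i0) //=.
  have a : 0 < (eps - `|u' i0 - u i0|) * `|x i0 - w i0|.
    rewrite mulr_gt0 // ?subr_gt0 // normr_gt0 subr_eq0; exact/eqP.
  have b : 0 <= \sum_(i | i != i0) (eps - `|u' i - u i|) * `|x i - w i|.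
    apply: sumr_ge0 => i _; rewrite mulr_ge0 // subr_ge0; exact: ltW.
  lra.
have le : \sum_i (eps - `|u' i - u i|) * `|x i - w i| <=
          eps * l1 x + \sum_i (u' i - u i) * (x i - w i).
  rewrite /l1 mulr_sumr -big_split; apply: ler_sum => i _ /=.
  rewrite mulrBl lerD2l -normrM lerNl.
  by have := ler_norm (- ((u' i - u i) * (x i - w i))); rewrite normrN.
have := he x hx.
set P1 := eps * l1 x in le *.
set S1 := \sum_i (u' i - u i) * (x i - w i) in E le.
set S2 := \sum_i (eps - `|u' i - u i|) * `|x i - w i| in pos le.
move=> h; lra.
Qed.

End Geo.
Lemma normal_pdfN (R : realType) (s x : R) : s != 0 -> normal_pdf 0 s (- x) = normal_pdf 0 s x.
Proof.
move=> s0; rewrite /normal_pdf (negbTE s0) /normal_fun.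
by rewrite !subr0 sqrrN.
Qed.

Lemma normal_probN (R : realType) (s : R) (A : set R) : s != 0 -> measurable A ->
  normal_prob 0 s (-%R @^-1` A) = normal_prob 0 s A.
Proof.
move=> s0 mA; rewrite /normal_prob.
transitivity (\int[lebesgue_measure]_(x in (-%R : R -> measurableTypeR R) @^-1` A)
   ((fun x => (normal_pdf 0 s x)%:E) \o (-%R : R -> measurableTypeR R)) x)%E.
  by apply: eq_integral => x _ /=; rewrite normal_pdfN.
rewrite -ge0_integral_pushforward //.
- by apply: eq_measure_integral => B mB _; exact: lebesgue_measureN.
- apply/measurable_EFinP; apply: measurable_funTS; exact: measurable_normal_pdf.
- by move=> y _; rewrite lee_fin normal_pdf_ge0.
Qed.
Section PiLambda.
Context (R : realType) d (T : measurableType d) (P : probability T R) (n : nat).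

Definition box (B : 'I_n -> set R) : set ('I_n -> R) := [set y | forall i, B i (y i)].
Definition boxes : set (set ('I_n -> R)) :=
  [set A | exists2 B : 'I_n -> set R, (forall i, measurable (B i)) & A = box B].

Lemma box_pre (Y : T -> 'I_n -> R) B :
  Y @^-1` box B = \bigcap_(i in setT) ((fun o => Y o i) @^-1` B i).
Proof.
by apply/seteqP; split => o /= h i; [move=> _; exact: h | exact: h].
Qed.

Lemma mpre_box (Y : T -> 'I_n -> R) B :
  (forall i, measurable_fun setT (fun o => Y o i)) ->
  (forall i, measurable (B i)) -> measurable (Y @^-1` box B).
Proof.
move=> mY mB; rewrite box_pre; apply: fin_bigcap_measurable; first exact: finite_finset.
move=> i _; rewrite -[X in measurable X]setTI; exact: mY.
Qed.

Variables (X X' : T -> 'I_n -> R).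
Hypothesis mX : forall i, measurable_fun setT (fun o => X o i).
Hypothesis mX' : forall i, measurable_fun setT (fun o => X' o i).
Hypothesis law : forall B, (forall i, measurable (B i)) ->
  P (X @^-1` box B) = P (X' @^-1` box B).

Definition Hc : set (set ('I_n -> R)) :=
  [set A | [/\ measurable (X @^-1` A), measurable (X' @^-1` A) &
             P (X @^-1` A) = P (X' @^-1` A)]].

Lemma law_sigma A : <<s boxes>> A -> P (X @^-1` A) = P (X' @^-1` A).
Proof.
have setIG : setI_closed boxes.
  move=> A1 A2 [B1 mB1 ->] [B2 mB2 ->]; exists (fun i => B1 i `&` B2 i).
    by move=> i; exact: measurableI.
  apply/seteqP; split => y /=; first by move=> [h1 h2] i; split.
  by move=> h; split => i; case: (h i).
have GH : boxes `<=` Hc.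
  by move=> _ [B mB ->]; split; [exact: mpre_box | exact: mpre_box | exact: law].
have DH : lambda_system setT Hc.
  split.
  - by move=> *; exact: subsetT.
  - by split; rewrite ?preimage_setT //; exact: measurableT.
  - move=> A1 B1 BA [mA mA' eA] [mB mB' eB].
    have e1 : forall Y : T -> 'I_n -> R, Y @^-1` (A1 `\` B1) = Y @^-1` A1 `\` Y @^-1` B1.
      by move=> Y; apply/seteqP; split => o.
    have e2 : forall Y : T -> 'I_n -> R, Y @^-1` A1 `&` Y @^-1` B1 = Y @^-1` B1.
      move=> Y; apply/seteqP; split => o; first by case.
      by move=> h; split => //; exact: BA.
    rewrite /Hc /= !e1; split; try exact: measurableD.
    have fin : forall Z, measurable Z -> (P Z < +oo)%E.
      by move=> Z mZ; apply: (le_lt_trans (probability_le1 _ mZ)); exact: ltry.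
    rewrite (measureD mA mB (fin _ mA)) (measureD mA' mB' (fin _ mA')) !e2; congr (_ - _)%E; [exact: eA | exact: eB].
  - move=> F ndF HF.
    have mF : forall i, measurable (X @^-1` F i) by move=> i; case: (HF i).
    have mF' : forall i, measurable (X' @^-1` F i) by move=> i; case: (HF i).
    have nd : forall Y : T -> 'I_n -> R, nondecreasing_seq (fun i => Y @^-1` F i).
      move=> Y a b ab; apply/subsetPset => o /=.
      by have /subsetPset := ndF a b ab; apply.
    rewrite /Hc /= !preimage_bigcup; split; try exact: bigcupT_measurable.
    have h1 : (fun i => P (X @^-1` F i)) @ \oo --> P (\bigcup_i X @^-1` F i).
      exact: (nondecreasing_cvg_mu mF (bigcupT_measurable _ mF) (nd X)).
    have h2 : (fun i => P (X' @^-1` F i)) @ \oo --> P (\bigcup_i X' @^-1` F i).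
      exact: (nondecreasing_cvg_mu mF' (bigcupT_measurable _ mF') (nd X')).
    have e : (fun i => P (X @^-1` F i)) = (fun i => P (X' @^-1` F i)).
      by apply/funext => i /=; case: (HF i).
    rewrite e in h1; exact: (cvg_unique (@ereal_hausdorff R) h1 h2).
have := @lambda_system_subset _ boxes setIG setT Hc DH GH.
move=> /(_ (fun _ _ => subsetT _)) sub hA.
by case: (sub _ hA).
Qed.

End PiLambda.

Section OpenSigma.
Context (R : realType) (n : nat).

Definition rbox (q : {ffun 'I_n -> rat * rat}) : set ('I_n -> R) :=
  @box R n (fun i => `](ratr (q i).1 : R), ratr (q i).2[%classic).

Lemma rbox_sigma q : <<s boxes R n >> (rbox q).
Proof.
apply: sub_sigma_algebra.
exists (fun i => `](ratr (q i).1 : R), ratr (q i).2[%classic) => // i.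

Qed.

Lemma open_sigma (G : set ('I_n -> R)) :
  (forall u, G u -> exists2 e, 0 < e &
     forall u', (forall i, `|u' i - u i| < e) -> G u') ->
  <<s boxes R n >> G.
Proof.
move=> hG.
pose F (k : nat) : set ('I_n -> R) :=
  match (unpickle k : option {ffun 'I_n -> rat * rat}) with
  | Some q => rbox q `&` [set _ | rbox q `<=` G]
  | None => set0 end.
have -> : G = \bigcup_k F k.
  apply/seteqP; split.
  - move=> u Gu; have [e e0 he] := hG u Gu.
    have : forall i, exists p : rat * rat,
        (u i - e < ratr p.1 < u i) /\ (u i < ratr p.2 < u i + e).
      move=> i.
      have l1 : u i - e < u i by rewrite ltrBlDr ltrDl.
      have l2 : u i < u i + e by rewrite ltrDl.
      have [a ha] := @rat_in_itvoo R (u i - e) (u i) l1.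
      have [b hb] := @rat_in_itvoo R (u i) (u i + e) l2.
      by exists (a, b); rewrite !in_itv /= in ha hb; split.
    move=> /fin_all_exists [f hf].
    exists (pickle [ffun i => f i]) => //.
    rewrite /F pickleK; split.
    + move=> i; rewrite ffunE /=; have [/andP[_ h1] /andP[h2 _]] := hf i.
      by rewrite in_itv /= h1 h2.
    + move=> u' hu'; apply: he => i; have := hu' i.
      rewrite ffunE /= in_itv /= => /andP[l1 l2].
      have [/andP[a1 _] /andP[_ b2]] := hf i.
      rewrite ltr_norml; apply/andP; split; lra.
  - move=> u [k _]; rewrite /F; case: (unpickle k) => [q [h1 h2]|//]; exact: h2.
apply: sigma_algebra_bigcup => k; rewrite /F; case: (unpickle k) => [q|]; last exact: sigma_algebra0.
case: (pselect (rbox q `<=` G)) => h.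
- have -> : rbox q `&` [set _ | rbox q `<=` G] = rbox q.
    by apply/seteqP; split => u; [case | move=> hu; split].
  exact: rbox_sigma.
- have -> : rbox q `&` [set _ | rbox q `<=` G] = set0.
    by apply/seteqP; split => u //; case.
  exact: sigma_algebra0.
Qed.

End OpenSigma.

Lemma sgn_sq (R : realType) (b : bool) (a : R) : (-1) ^+ b * ((-1) ^+ b * a) = a.
Proof. by case: b; rewrite /= ?expr1 ?expr0 ?mulN1r ?opprK ?mul1r. Qed.

Theorem theorem3 (R : realType) (m n : nat) (H : 'M['F_2]_(m, n))
  (c : 'rV['F_2]_n) (w t : 'I_n -> R) :
  codeword H c ->
  LP_pseudocodeword H w ->
  recovery_cone H w t ->
  recovery_cone H (relpt c w) (phi c t) /\
  (forall sigma : R, 0 < sigma ->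
   forall (d : measure_display) (T : measurableType d) (P : probability T R)
          (eta : 'I_n -> {RV P >-> R}),
     iid_normal eta sigma ->
     P [set o | unique_opt H (fun i => t i + eta i o) w] =
     P [set o | unique_opt H (fun i => phi c t i + eta i o) (relpt c w)]).
Proof.
move=> Hc [hw _] ht; split; first exact: cone_flip.
move=> sigma s0 d T P eta [ind dist].
have s0' : sigma != 0 by rewrite gt_eqF.
have w01 := @poly01 R m n H w hw.
pose G0 : set ('I_n -> R) := [set u | unique_opt H u w].
pose X := fun o (i : 'I_n) => t i + eta i o.
pose X' := fun o (i : 'I_n) => t i + (-1) ^+ (c 0 i != 0) * eta i o.
have E2 : [set o | unique_opt H (fun i => phi c t i + eta i o) (relpt c w)] = X' @^-1` G0.
  apply/seteqP; split => o /= h.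
  - have := @uopt_flip R m n H c _ _ Hc h; rewrite relptK //.
    have -> : phi c (fun i => phi c t i + eta i o) = X' o.
      by apply/funext => i; rewrite /phi /X' mulrDr sgn_sq.
    by [].
  - have := @uopt_flip R m n H c _ _ Hc h.
    have -> : phi c (X' o) = (fun i => phi c t i + eta i o).
      by apply/funext => i; rewrite /phi /X' mulrDr sgn_sq.
    by [].
rewrite E2.
have E1 : [set o | unique_opt H (fun i => t i + eta i o) w] = X @^-1` G0 by [].
rewrite E1.
apply: (@law_sigma R d T P n X X').
- move=> i; apply: measurable_funD => //; exact: measurable_funP.
- move=> i; apply: measurable_funD => //; apply: measurable_funM => //; exact: measurable_funP.
- move=> B mB.
  pose C i := [set y : R | B i (t i + y)].
  pose C' i := [set y : R | B i (t i + (-1) ^+ (c 0 i != 0) * y)].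
  have mC : forall i, measurable (C i).
    move=> i; have mf : measurable_fun setT (fun y : R => t i + y).
      by apply: measurable_funD => //; exact: measurable_id.
    by have := mf measurableT _ (mB i); rewrite setTI.
  have mC' : forall i, measurable (C' i).
    move=> i; have mf : measurable_fun setT (fun y : R => t i + (-1) ^+ (c 0 i != 0) * y).
      apply: measurable_funD => //; apply: measurable_funM => //; exact: measurable_id.
    by have := mf measurableT _ (mB i); rewrite setTI.
  have pX : X @^-1` box R n B = \bigcap_(i in [set: 'I_n]) (eta i @^-1` C i).
    by apply/seteqP; split => o /= h i; [move=> _; exact: h | exact: h].
  have pX' : X' @^-1` box R n B = \bigcap_(i in [set: 'I_n]) (eta i @^-1` C' i).
    by apply/seteqP; split => o /= h i; [move=> _; exact: h | exact: h].
  rewrite pX pX' (ind C mC) (ind C' mC').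
  apply: eq_bigr => i _.
  have dI : forall A, measurable A -> P (eta i @^-1` A) = normal_prob 0 sigma A.
    by move=> A mA; rewrite -(dist i A mA).
  rewrite !dI //.
  case E: (c 0 i != 0).
  + have -> : C' i = (-%R) @^-1` C i.
      by rewrite /C' /C E; apply/seteqP; split => y /=; rewrite expr1 mulN1r.
    by rewrite normal_probN.
  + have -> : C' i = C i.
      by rewrite /C' /C E; apply/seteqP; split => y /=; rewrite expr0 mul1r.
    by [].
- by apply: open_sigma => u hu; exact: (@uopt_open R m n H w hw u hu).
Qed.
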